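(* Let $c\ge 0$ be a real number, $q$ a positive integer, and $(e_n)_{n\ge q}$ a sequence of real numbers such that $$e_n\le c+\frac1n\sum_{u=q}^{n-1}e_u\quad\text{for all } n\ge q.$$ Then $e_n\le c\log(en/q)$ for all $n\ge q$ (here $e$ inside the logarithm is Euler's number). *)

(* Defs.v *)
From Stdlib Require Import Reals List.
Open Scope R_scope.

(* sum_range f a b = f a + f (a+1) + ... + f (b-1)  (empty if b <= a) *)
Definition sum_range (f : nat -> R) (a b : nat) : R :=
  fold_right Rplus 0 (map f (seq a (b - a))).

(* Main.v *)
Require Import Defs.
From Stdlib Require Import Reals List Lra Lia.
Open Scope R_scope.

Lemma ln_div (x y : R) : 0 < x -> 0 < y -> ln (x / y) = ln x - ln y.
Proof.
  intros hx hy. unfold Rdiv. rewrite ln_mult, ln_Rinv; try lra.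
  apply Rinv_0_lt_compat; lra.
Qed.

Lemma fr_mono (f g : nat -> R) (l : list nat) :
  (forall x, In x l -> f x <= g x) ->
  fold_right Rplus 0 (map f l) <= fold_right Rplus 0 (map g l).
Proof.
  induction l as [|a l IH]; simpl; intros H; [lra|].
  assert (f a <= g a) by (apply H; auto).
  assert (fold_right Rplus 0 (map f l) <= fold_right Rplus 0 (map g l))
    by (apply IH; intros; apply H; auto). lra.
Qed.

Lemma fr_scal (c : R) (g : nat -> R) (l : list nat) :
  fold_right Rplus 0 (map (fun u => c * g u) l) = c * fold_right Rplus 0 (map g l).
Proof. induction l as [|a l IH]; simpl; [ring|rewrite IH; ring]. Qed.

Lemma fr_app (l : list R) (x : R) :
  fold_right Rplus 0 (l ++ x :: nil) = fold_right Rplus 0 l + x.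
Proof. induction l as [|a l IH]; simpl; [ring|rewrite IH; ring]. Qed.

Lemma sum_range_S (f : nat -> R) (a b : nat) : (a <= b)%nat ->
  sum_range f a (S b) = sum_range f a b + f b.
Proof.
  intros H. unfold sum_range.
  replace (S b - a)%nat with (S (b - a)) by lia.
  rewrite seq_S, map_app. simpl map at 2. rewrite fr_app. do 2 f_equal. lia.
Qed.

Lemma sum_range_nil (f : nat -> R) (a : nat) : sum_range f a a = 0.
Proof. unfold sum_range. rewrite Nat.sub_diag. reflexivity. Qed.

Lemma key_ineq (n : nat) : (0 < n)%nat ->
  INR (S n) * ln (INR n) + 1 <= INR (S n) * ln (INR (S n)).
Proof.
  intros Hn.
  assert (H0 : 0 < INR n) by (apply lt_0_INR; lia).
  rewrite S_INR.
  set (y := INR n / (INR n + 1)).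
  assert (Hy : 0 < y) by (unfold y; apply Rdiv_lt_0_compat; lra).
  assert (Hl : ln y <= y - 1).
  { pose proof (exp_ineq1_le (y - 1)) as E.
    destruct (Rle_dec (ln y) (y - 1)) as [h|h]; auto.
    apply Rnot_le_lt in h. apply exp_increasing in h. rewrite exp_ln in h by exact Hy. lra. }
  assert (Hln : ln y = ln (INR n) - ln (INR n + 1)).
  { unfold y. rewrite ln_div; lra. }
  assert (Hy1 : (INR n + 1) * (y - 1) = -1).
  { unfold y. field. lra. }
  assert ((INR n + 1) * ln y <= (INR n + 1) * (y - 1)).
  { apply Rmult_le_compat_l; lra. }
  rewrite Hln in H. nra.
Qed.

Lemma sum_bound (q : nat) (hq : (0 < q)%nat) : forall n, (q <= n)%nat ->
  sum_range (fun u => 1 + ln (INR u) - ln (INR q)) q n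
  <= INR n * (ln (INR n) - ln (INR q)).
Proof.
  intros n Hn. induction Hn as [|n Hn IH].
  - rewrite sum_range_nil. lra.
  - rewrite sum_range_S by lia.
    pose proof (key_ineq n ltac:(lia)).
    rewrite S_INR in *. nra.
Qed.

Theorem lemma2p1 (c : R) (q : nat) (e : nat -> R)
  (hc : 0 <= c) (hq : (0 < q)%nat)
  (he : forall n : nat, (q <= n)%nat ->
          e n <= c + / INR n * sum_range e q n) :
  forall n : nat, (q <= n)%nat -> e n <= c * ln (exp 1 * INR n / INR q).
Proof.
  assert (Hq : 0 < INR q) by (apply lt_0_INR; lia).
  assert (Hform : forall n, (q <= n)%nat ->
     ln (exp 1 * INR n / INR q) = 1 + ln (INR n) - ln (INR q)).
  { intros n Hn. assert (0 < INR n) by (apply lt_0_INR; lia).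
    rewrite ln_div, ln_mult, ln_exp; try lra.
    - apply exp_pos.
    - apply Rmult_lt_0_compat; [apply exp_pos|lra]. }
  assert (Main : forall N m, (q <= m <= N)%nat ->
     e m <= c * (1 + ln (INR m) - ln (INR q))).
  { induction N as [|N IH]; intros m Hm.
    - lia.
    - destruct (Nat.eq_dec m (S N)) as [->|Hne]; [|apply IH; lia].
      assert (Hn : 0 < INR (S N)) by (apply lt_0_INR; lia).
      eapply Rle_trans; [apply he; lia|].
      assert (Hs : sum_range e q (S N) <=
                   c * sum_range (fun u => 1 + ln (INR u) - ln (INR q)) q (S N)).
      { unfold sum_range. rewrite <- fr_scal. apply fr_mono.
        intros x Hx. apply in_seq in Hx. apply IH. lia. }
      pose proof (sum_bound q hq (S N) ltac:(lia)) as Hb.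
      assert (/ INR (S N) * sum_range e q (S N) <= c * (ln (INR (S N)) - ln (INR q))).
      { apply Rle_trans with (/ INR (S N) * (c * (INR (S N) * (ln (INR (S N)) - ln (INR q))))).
        - apply Rmult_le_compat_l; [left; apply Rinv_0_lt_compat; lra|].
          eapply Rle_trans; [exact Hs|]. apply Rmult_le_compat_l; lra.
        - right. field. lra. }
      lra. }
  intros n Hn. rewrite Hform by exact Hn. apply (Main n). lia.
Qed.
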